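(* Let $p\equiv 3\pmod 4$ be a prime and $t\in\mathbb{F}_p$. The equation $y^2=x^3-(t^2+1)x$ over $\mathbb{F}_p$ defines a supersingular elliptic curve $E_t/\mathbb{F}_p$, and the point $(-1,t)$ is not divisible by $2$ in $E_t(\mathbb{F}_p)$, i.e. there is no $Q\in E_t(\mathbb{F}_p)$ with $2Q=(-1,t)$. *)

(* Defs.v *)
(* Short Weierstrass elliptic curves y^2 = x^3 + a x + b
   over a field F (characteristic assumed different from 2 where relevant),
   points as option (F * F) with None = point at infinity O. *)
From HB Require Import structures.
From mathcomp Require Import all_boot all_order all_algebra.
Set Implicit Arguments. Unset Strict Implicit. Unset Printing Implicit Defensive.
Import Order.TTheory GRing.Theory Num.Theory.
Local Open Scope ring_scope.

Section EC.
Variable F : fieldType.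

Definition is_elliptic (a b : F) : Prop := 4%:R * a ^+ 3 + 27%:R * b ^+ 2 != 0.

Definition on_curve (a b : F) (P : option (F * F)) : bool :=
  match P with
  | None => true
  | Some (x, y) => y ^+ 2 == x ^+ 3 + a * x + b
  end.

Definition ec_add (a b : F) (P Q : option (F * F)) : option (F * F) :=
  match P, Q with
  | None, _ => Q
  | _, None => P
  | Some (x1, y1), Some (x2, y2) =>
      if x1 == x2 then
        if y1 + y2 == 0 then None
        else let l := (3%:R * x1 ^+ 2 + a) / (2%:R * y1) in
             let x3 := l ^+ 2 - x1 - x2 in
             Some (x3, l * (x1 - x3) - y1)
      else let l := (y2 - y1) / (x2 - x1) in
           let x3 := l ^+ 2 - x1 - x2 in
           Some (x3, l * (x1 - x3) - y1)
  end.
End EC.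

Definition npoints (p : nat) (a b : 'F_p) : nat :=
  #|[set P : option ('F_p * 'F_p) | on_curve a b P]|.

(* Supersingularity over the prime field F_p: the trace of Frobenius
   a_p = p + 1 - #E(F_p) is divisible by p (equivalently E[p](Fpbar) = 0). *)
Definition supersingular_Fp (p : nat) (a b : 'F_p) : Prop :=
  (p%:Z %| (p%:Z + 1 - (npoints a b)%:Z))%Z.

(* Main.v *)
Require Import Defs.
From HB Require Import structures.
From mathcomp Require Import all_boot all_order all_algebra all_field.
From mathcomp Require Import ring zify.
Import GRing.Theory.
Local Open Scope ring_scope.

Section P.
Variable p : nat.
Hypothesis hp : prime p.
Hypothesis hp4 : (p %% 4 = 3)%N.

Lemma p_gt2 : (2 < p)%N.
Proof. have := prime_gt1 hp. case: p hp4 => [|[|[|]]] //. Qed.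

Lemma two_neq0 : (2%:R : 'F_p) != 0.
Proof.
apply/eqP => /(congr1 (@nat_of_ord _)); rewrite val_Fp_nat // modn_small //; last exact: p_gt2.
Qed.

Lemma neg1_nsq (s : 'F_p) : s ^+ 2 != -1.
Proof.
apply/eqP => hs.
have s0 : s != 0 by apply/eqP => e; move: hs; rewrite e expr0n /= => /eqP; rewrite eq_sym oppr_eq0 oner_eq0.
have hpk : p = (4 * (p %/ 4) + 3)%N by rewrite mulnC {1}(divn_eq p 4) hp4.
have := expf_card s; rewrite card_Fp // [X in s ^+ X = _]hpk.
rewrite exprD exprM.
have -> : s ^+ 3 = s ^+ 2 * s by rewrite exprS mulrC.
have -> : s ^+ 4 = (s ^+ 2) ^+ 2 by rewrite -exprM.
rewrite hs sqrrN expr1n expr1n mul1r mulN1r => h.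
have : 2%:R * s = 0 by rewrite mulr2n mulrDl mul1r -{1}h addNr.
by move/eqP; rewrite mulf_eq0 (negbTE two_neq0) (negbTE s0).
Qed.

Lemma sum_eq1 (T : finType) (a : T) : (\sum_(y : T) (y == a : nat))%N = 1%N.
Proof.
rewrite (bigD1 a) //= eqxx big1 ?addn0 // => y /negbTE -> //.
Qed.

Definition N (c : 'F_p) : nat := (\sum_(y : 'F_p) (y ^+ 2 == c : nat))%N.

Lemma sumN : (\sum_(c : 'F_p) N c)%N = p.
Proof.
rewrite /N exchange_big /=.
rewrite (eq_bigr (fun _ => 1%N)); last first.
  move=> y _; rewrite (bigD1 (y ^+ 2)) //= eqxx big1 ?addn0 // => c.
  by rewrite eq_sym => /negbTE ->.
by rewrite sum1_card card_Fp.
Qed.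

Lemma Npos c : (0 < N c)%N -> exists s, s ^+ 2 = c.
Proof.
case: (pickP (fun y : 'F_p => y ^+ 2 == c)) => [y /eqP hy | h0]; first by exists y.
by rewrite /N big1 // => y _; rewrite h0.
Qed.

Lemma Nle (s : 'F_p) : (N (s ^+ 2) <= 2)%N.
Proof.
apply: (@leq_trans (\sum_(y : 'F_p) ((y == s : nat) + (y == - s : nat)))%N).
  apply: leq_sum => y _; rewrite eqf_sqr.
  by case: (y == s); case: (y == -s).
by rewrite big_split /= !sum_eq1.
Qed.

Lemma N0 : (N 0%R <= 1)%N.
Proof.
have h1 : (\sum_(y : 'F_p) (y == (0%R : 'F_p) : nat) = 1)%N by rewrite sum_eq1.
have h2 : (N 0%R <= \sum_(y : 'F_p) (y == (0%R : 'F_p) : nat))%N.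
  by apply: leq_sum => y _; rewrite expf_eq0.
by rewrite -h1.
Qed.

Lemma Nle2 c : (N c <= 2)%N.
Proof.
case: (posnP (N c)) => [-> //|/Npos [s <-]]; exact: Nle.
Qed.

Lemma gle c : (N c + N (- c) <= 2)%N.
Proof.
case: (posnP (N c)) => [->|/Npos [s hs]]; first exact: Nle2.
have [s0e|s0] := eqVneq s 0.
  rewrite -hs s0e expr0n /= oppr0. by have := N0; case: (N 0%R) => [|[|]].

case: (posnP (N (- c))) => [->|/Npos [r hr]]; first by rewrite addn0 Nle2.
exfalso; have := neg1_nsq (r / s); rewrite expr_div_n hr -hs mulNr divff ?eqxx //.
by rewrite expf_neq0.
Qed.

Lemma geq c : (N c + N (- c) = 2)%N.
Proof.
have hs : (\sum_(c : 'F_p) (N c + N (- c)))%N = (p + p)%N.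
  have e : (\sum_(c : 'F_p) N (- c) = \sum_(c : 'F_p) N c)%N by rewrite [RHS](reindex_inj oppr_inj).
  by rewrite big_split /= e sumN.
have h2 : (\sum_(c : 'F_p) (2 - (N c + N (- c))) + \sum_(c : 'F_p) (N c + N (- c)))%N
          = (\sum_(c : 'F_p) 2)%N.
  by rewrite -big_split; apply: eq_bigr => d _; apply: subnK; exact: gle.
rewrite hs sum_nat_const card_Fp // in h2.
have : (\sum_(c : 'F_p) (2 - (N c + N (- c))) == 0)%N.
  by apply/eqP; lia.
rewrite sum_nat_eq0 => /forallP /(_ c) /=; rewrite subn_eq0 => h.
by apply/eqP; rewrite eqn_leq gle h.
Qed.

Lemma sumf (a : 'F_p) : (\sum_(x : 'F_p) N (x ^+ 3 + a * x + 0)%R)%N = p.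
Proof.
set S := (\sum_(x : 'F_p) N (x ^+ 3 + a * x + 0)%R)%N.
have e : S = (\sum_(x : 'F_p) N (- (x ^+ 3 + a * x + 0))%R)%N.
  rewrite /S (reindex_inj oppr_inj); apply: eq_bigr => x _; congr N; ring.
have : (S + S = p + p)%N.
  rewrite {2}e -big_split /=.
  rewrite (eq_bigr (fun _ => 2%N)); last by move=> x _; exact: geq.
  by rewrite sum_nat_const card_Fp // muln2 addnn.
lia.
Qed.

Lemma npointsE (a : 'F_p) : npoints a 0 = p.+1.
Proof.
rewrite /npoints.
set B := [set xy : 'F_p * 'F_p | on_curve a 0 (Some xy)].
have -> : [set P : option ('F_p * 'F_p) | on_curve a 0 P] = None |: (Some @: B).
  apply/setP => [[xy|]]; rewrite !inE //=.
  rewrite (mem_imset _ _ (@Some_inj _)) inE //.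
rewrite cardsU1 card_imset; last exact: Some_inj.
have -> : (None \notin Some @: B) = true.
  by apply/negP => /imsetP [xy _].
rewrite add1n; congr S.
rewrite -sum1_card big_mkcond /=.
transitivity (\sum_(x : 'F_p) N (x ^+ 3 + a * x + 0)%R)%N; last exact: sumf.
rewrite /N pair_bigA /=.
apply: eq_bigr => [[x y]] _; rewrite /B inE /=.
by case: (_ == _).
Qed.
End P.

Theorem proposition1 (p : nat) (hp : prime p) (hp4 : (p %% 4 = 3)%N) (t : 'F_p) :
  let a : 'F_p := - (t ^+ 2 + 1) in
  [/\ is_elliptic a 0,
      supersingular_Fp a 0,
      on_curve a 0 (Some (-1, t)) &
      ~ exists Q : option ('F_p * 'F_p),
          on_curve a 0 Q /\ ec_add a 0 Q Q = Some (-1, t)].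
Proof.
move=> a.
have ha : a != 0 by rewrite oppr_eq0 addr_eq0 neg1_nsq.
have h2 := two_neq0 p hp hp4.
split.
- rewrite /is_elliptic expr0n /= mulr0 addr0.
  have -> : (4%:R : 'F_p) = 2%:R * 2%:R by rewrite -natrM.
  by rewrite !mulf_neq0 // expf_neq0.
- rewrite /supersingular_Fp npointsE // -[p.+1]addn1 PoszD subrr.
  exact: dvdz0.
- rewrite /on_curve /a; apply/eqP; ring.
- move=> [[[x y]|] [hc he]] //.
  move: he; rewrite /ec_add eqxx; case: ifP => // hy he.
  have hx : ((3%:R * x ^+ 2 + a) / (2%:R * y)) ^+ 2 - x - x = -1 :=
    f_equal (fun P => oapp fst 0 P) he.
  have y0 : y != 0 by apply: contraFneq hy => ->; rewrite addr0.
  have := neg1_nsq p hp hp4 ((x ^+ 2 - a) / (2%:R * y)).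
  rewrite -hx -subr_eq0 => /negP; apply.
  have -> : ((x ^+ 2 - a) / (2%:R * y)) ^+ 2 - (((3%:R * x ^+ 2 + a) / (2%:R * y)) ^+ 2 - x - x)
     = 2%:R * x * (y ^+ 2 - (x ^+ 3 + a * x + 0)) / y ^+ 2.
    by field; rewrite h2 y0.
  by move: hc => /= /eqP ->; rewrite subrr mulr0 mul0r.
Qed.
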